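(* Let $T\in\mathcal A$ and let $\mathbb Q=\mathbb Q(T)$. There is a family $\mathcal F$ of $\aleph_1$ many dense subsets of $\mathbb Q$ such that for every filter $G\subseteq\mathbb Q$ meeting every member of $\mathcal F$, letting $T^\ast=\bigcup\{<_p:p\in G\}$ (a tree order on $\bigcup\{u^p:p\in G\}$) and $c=\bigcup\{c^p:p\in G\}$, we have $(T^\ast,T,c)\in\mathcal A_2^{\rm sp}$.
   Context: For an ordinal $\gamma<\omega_1$, ${\rm ht}(\gamma)$ is the unique $\alpha$ with $\gamma\in[\omega\alpha,\omega\alpha+\omega)$; ${\rm ht}(\langle\rangle)=-1$. $\mathcal A$ denotes the set of all trees $T$ whose underlying set is $\{\langle\rangle\}\cup X$ for some $X\subseteq\omega_1$, where $\langle\rangle$ is the root, such that $T$ has height $\omega_1$, no uncountable branch, is normal (two distinct elements of the same limit level have different sets of predecessors), and ${\rm lev}_\alpha(T)\subseteq[\omega\alpha,\omega\alpha+\omega)$ for all $\alpha<\omega_1$. $x\cap_T y$ denotes the meet, $x\perp_T y$ incomparability, and for $(x,y)$ with both of level $\alpha$, $\alpha(x,y)=\alpha$. $\mathcal A_2^{\rm sp}$ is the set of triples $(T_1,T_2,c)$ with $T_1,T_2\in\mathcal A$ and $c:\bigcup_{\delta<\omega_1\text{ limit}}{\rm lev}_\delta(T_1)\times{\rm lev}_\delta(T_2)\to\omega$ such that $c(x_1,y_1)=c(x_2,y_2)$ with $(x_1,y_1)\ne(x_2,y_2)$ implies $\alpha(x_1,y_1)\ne\alpha(x_2,y_2)$,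 $x_1\perp_{T_1}x_2$, $y_1\perp_{T_2}y_2$ and ${\rm ht}(x_1\cap_{T_1}x_2)>{\rm ht}(y_1\cap_{T_2}y_2)$. The forcing $\mathbb Q(T)$ for $T\in\mathcal A$ consists of all $p=(u^p,v^p,<_p,c^p)$ such that: (1) $u^p\subseteq\omega_1\cup\{\langle\rangle\}$ and $v^p\subseteq T$ are finite and contain $\langle\rangle$; (2) for every $\alpha\in v^p$ there is $\beta\in u^p$ with ${\rm ht}(\alpha)={\rm ht}(\beta)$; (3) $<_p$ is a tree order on $u^p$ with root $\langle\rangle$, such that $\alpha<_p\beta$ implies ${\rm ht}(\alpha)<{\rm ht}(\beta)$ and any two distinct elements $\alpha,\beta\in u^p$ have a meet $\alpha\cap_{<_p}\beta\in u^p$; (4) $c^p$ is a function from $\bigcup_{\delta<\omega_1\text{ limit}}{\rm lev}_\delta(u^p)\times{\rm lev}_\delta(v^p)$ to $\omega$ (levels of $u^p$ meaning elements of height $\delta$, levels of $v^p$ meaning levels in $T$) such that if $c^p(x_1,y_1)=c^p(x_2,y_2)$ and $(x_1,y_1)\ne(x_2,y_2)$ then $\alpha(x_1,y_1)\ne\alpha(x_2,y_2)$, $x_1\perp_{<_p}x_2$, $y_1\perp_T y_2$ and ${\rm ht}(x_1\cap_{<_p}x_2)>{\rm ht}(y_1\cap_T y_2)$. The order: $p\le q$ iff $u^p\subseteq u^q$, $v^p\subseteq v^q$, $<_p\subseteq<_q$, $c^p\subseteq c^q$, and the meets (and root) computed in $<_p$ remain the meets (and root) in $<_q$. *)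

(* Defs.v *)
From Stdlib Require Import List.
Import ListNotations.
Set Implicit Arguments.

(* Encoding conventions:
   - omega_1 is an arbitrary type W with a strict order lt satisfying
     [is_omega1] (a well-order, uncountable, all proper initial segments
     countable); any such (W,lt) is isomorphic to omega_1.
   - The countable ordinal gamma = omega*alpha + n is coded by Some (alpha, n),
     so ht (Some (alpha,n)) = alpha; the root <> is coded by None, ht None = -1
     (coded as None : option W). *)

Section Defs.
Context {W : Type} (lt : W -> W -> Prop).

Definition Pt := option (W * nat).

Definition ht (x : Pt) : option W :=
  match x with None => None | Some (a, _) => Some a end.

Definition hlt (a b : option W) : Prop :=
  match a, b with
  | None, Some _ => True
  | Some a', Some b' => lt a' b'
  | _, _ => False
  end.

Definition countable {X : Type} (P : X -> Prop) : Prop :=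
  exists f : X -> nat, forall x y, P x -> P y -> f x = f y -> x = y.

Definition is_omega1 : Prop :=
  (forall a, ~ lt a a) /\
  (forall a b c, lt a b -> lt b c -> lt a c) /\
  (forall a b, lt a b \/ a = b \/ lt b a) /\
  well_founded lt /\
  ~ countable (fun _ : W => True) /\
  (forall a, countable (fun b => lt b a)).

Definition is_limit (d : W) : Prop :=
  (exists b, lt b d) /\ (forall b, lt b d -> exists c, lt b c /\ lt c d).

Definition is_tree_order (S : Pt -> Prop) (R : Pt -> Pt -> Prop) : Prop :=
  (forall x y, R x y -> S x /\ S y) /\
  (forall x, ~ R x x) /\
  (forall x y z, R x y -> R y z -> R x z) /\
  S None /\
  (forall x, S x -> x <> None -> R None x) /\
  (forall x y z, R y x -> R z x -> y = z \/ R y z \/ R z y).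

Definition meet (R : Pt -> Pt -> Prop) (x y m : Pt) : Prop :=
  (m = x \/ R m x) /\ (m = y \/ R m y) /\
  (forall z, (z = x \/ R z x) -> (z = y \/ R z y) -> z = m \/ R z m).

Definition perp (R : Pt -> Pt -> Prop) (x y : Pt) : Prop :=
  x <> y /\ ~ R x y /\ ~ R y x.

Definition is_chain (S : Pt -> Prop) (R : Pt -> Pt -> Prop) (B : Pt -> Prop) :=
  (forall x, B x -> S x) /\
  (forall x y, B x -> B y -> x = y \/ R x y \/ R y x).

Definition is_branch (S : Pt -> Prop) (R : Pt -> Pt -> Prop) (B : Pt -> Prop) :=
  is_chain S R B /\
  (forall C, is_chain S R C -> (forall x, B x -> C x) -> forall x, C x -> B x).

Definition inA (S : Pt -> Prop) (R : Pt -> Pt -> Prop) : Prop :=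
  is_tree_order S R /\
  (* lev_alpha(T) ⊆ [omega alpha, omega alpha + omega): the tree level of
     every non-root x equals ht x *)
  (forall x y, S x -> R y x -> hlt (ht y) (ht x)) /\
  (forall a n b, S (Some (a, n)) -> lt b a ->
       exists y, R y (Some (a, n)) /\ ht y = Some b) /\
  (forall a, exists n, S (Some (a, n))) /\
  (forall B, is_branch S R B -> countable B) /\
  (forall x y d, S x -> S y -> ht x = Some d -> ht y = Some d -> is_limit d ->
       x <> y -> ~ (forall z, R z x <-> R z y)).

Definition coloring_ok (R1 R2 : Pt -> Pt -> Prop) (c : Pt -> Pt -> nat -> Prop)
  : Prop :=
  forall x1 y1 x2 y2 n, c x1 y1 n -> c x2 y2 n -> (x1, y1) <> (x2, y2) ->
    ht x1 <> ht x2 /\ perp R1 x1 x2 /\ perp R2 y1 y2 /\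
    exists m1 m2, meet R1 x1 x2 m1 /\ meet R2 y1 y2 m2 /\ hlt (ht m2) (ht m1).

Definition limit_pair (S1 S2 : Pt -> Prop) (x y : Pt) : Prop :=
  exists d, is_limit d /\ S1 x /\ S2 y /\ ht x = Some d /\ ht y = Some d.

(* (T1, T2, c) in A_2^sp, c given as a relation (graph of a function) *)
Definition inA2sp (S1 : Pt -> Prop) (R1 : Pt -> Pt -> Prop)
  (S2 : Pt -> Prop) (R2 : Pt -> Pt -> Prop) (c : Pt -> Pt -> nat -> Prop) : Prop :=
  inA S1 R1 /\ inA S2 R2 /\
  (forall x y, (exists n, c x y n) <-> limit_pair S1 S2 x y) /\
  (forall x y n m, c x y n -> c x y m -> n = m) /\
  coloring_ok R1 R2 c.

Record cond : Type := Cond {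
  cu : list Pt;
  cv : list Pt;
  clt : Pt -> Pt -> Prop;
  cc : Pt -> Pt -> option nat }.

Definition inQ (TS : Pt -> Prop) (tlt : Pt -> Pt -> Prop) (p : cond) : Prop :=
  let u := fun x => In x (cu p) in
  let v := fun x => In x (cv p) in
  u None /\ v None /\ (forall y, v y -> TS y) /\
  (forall a, v a -> exists b, u b /\ ht a = ht b) /\
  is_tree_order u (clt p) /\
  (forall x y, clt p x y -> hlt (ht x) (ht y)) /\
  (forall x y, u x -> u y -> x <> y -> exists m, u m /\ meet (clt p) x y m) /\
  (forall x y, (exists n, cc p x y = Some n) <-> limit_pair u v x y) /\
  coloring_ok (clt p) tlt (fun x y n => cc p x y = Some n).

(* p <= q : q extends p *)
Definition Qle (p q : cond) : Prop :=
  (forall x, In x (cu p) -> In x (cu q)) /\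
  (forall x, In x (cv p) -> In x (cv q)) /\
  (forall x y, clt p x y -> clt q x y) /\
  (forall x y n, cc p x y = Some n -> cc q x y = Some n) /\
  (forall x y m, In x (cu p) -> In y (cu p) -> x <> y ->
     meet (clt p) x y m -> meet (clt q) x y m).

Definition Qdense (TS : Pt -> Prop) (tlt : Pt -> Pt -> Prop) (D : cond -> Prop) :=
  (forall p, D p -> inQ TS tlt p) /\
  (forall p, inQ TS tlt p -> exists q, D q /\ Qle p q).

Definition Qfilter (TS : Pt -> Prop) (tlt : Pt -> Pt -> Prop) (G : cond -> Prop) :=
  (forall p, G p -> inQ TS tlt p) /\
  (exists p, G p) /\
  (forall p q, G q -> inQ TS tlt p -> Qle p q -> G p) /\
  (forall p q, G p -> G q -> exists r, G r /\ Qle p r /\ Qle q r).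

End Defs.

(* Main.v *)
Require Import Defs.
From Stdlib Require Import List Arith Lia Classical ClassicalEpsilon FunctionalExtensionality Cantor.
Import ListNotations.
Set Implicit Arguments.

Section Card.
Context {W : Type} (lt : W -> W -> Prop) (Hw : is_omega1 lt).

Lemma lt_irr : forall a, ~ lt a a. Proof. apply Hw. Qed.
Lemma lt_trans : forall a b c, lt a b -> lt b c -> lt a c. Proof. apply Hw. Qed.
Lemma lt_tot : forall a b, lt a b \/ a = b \/ lt b a. Proof. apply Hw. Qed.
Lemma lt_wf : well_founded lt. Proof. apply Hw. Qed.
Lemma W_unc : ~ countable (fun _ : W => True). Proof. apply Hw. Qed.
Lemma W_seg : forall a, countable (fun b => lt b a). Proof. apply Hw. Qed.

Lemma inhW : inhabited W.
Proof.
  destruct (classic (inhabited W)) as [H|H]; auto.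
  exfalso; apply W_unc. exists (fun _ => 0). intros x; exfalso; apply H; constructor; exact x.
Qed.

Lemma min_exists : forall P : W -> Prop, (exists x, P x) ->
  exists m, P m /\ forall y, P y -> ~ lt y m.
Proof.
  intros P [x Hx]. apply NNPP; intro Hn.
  assert (forall y, ~ P y).
  { intro y. induction (lt_wf y) as [y _ IH]. intro Py. apply Hn.
    exists y; split; auto. intros z Pz Hz. exact (IH z Hz Pz). }
  exact (H x Hx).
Qed.

Lemma count_le : forall a, countable (fun b => lt b a \/ b = a).
Proof.
  intro a. destruct (W_seg a) as [f Hf].
  exists (fun b => if excluded_middle_informative (b = a) then 0 else S (f b)).
  intros x y Hx Hy. destruct excluded_middle_informative, excluded_middle_informative; subst; auto;
  try discriminate. intro E; injection E; intro E'.
  destruct Hx; [|contradiction]. destruct Hy; [|contradiction]. auto.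
Qed.

Lemma countable_bounded : forall X : W -> Prop, countable X -> exists c, forall x, X x -> lt x c.
Proof.
  intros X [g Hg]. apply NNPP; intro Hn.
  assert (Hs : forall c, exists x, X x /\ (lt c x \/ c = x)).
  { intro c. apply NNPP; intro H1. apply Hn. exists c. intros x Xx.
    destruct (lt_tot x c) as [h|[h|h]]; auto; exfalso; apply H1; exists x; auto. }
  apply choice in Hs. destruct Hs as [sel Hsel].
  assert (HF : forall x, exists f : W -> nat, forall a b, (lt a x \/ a = x) -> (lt b x \/ b = x) -> f a = f b -> a = b).
  { intro x. destruct (count_le x) as [f Hf]. exists f. auto. }
  apply choice in HF. destruct HF as [F HF].
  apply W_unc. exists (fun c => Cantor.to_nat (g (sel c), F (sel c) c)).
  intros x y _ _ E.
  apply (f_equal Cantor.of_nat) in E. rewrite !Cantor.cancel_of_to in E.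
  injection E; intros E2 E1.
  destruct (Hsel x) as [Xx Hx]; destruct (Hsel y) as [Xy Hy].
  assert (Es : sel x = sel y) by (apply Hg; auto).
  rewrite Es in E2, Hx.
  apply (HF (sel y)); auto.
Qed.

Definition nxt (a : W) : W := epsilon inhW (fun b => lt a b).
Lemma nxt_spec : forall a, lt a (nxt a).
Proof.
  intro a. unfold nxt. apply epsilon_spec.
  destruct (countable_bounded (X := fun b => b = a)) as [c Hc].
  - exists (fun _ => 0). intros; subst; auto.
  - exists c; auto.
Qed.

Definition iterK (k : nat) (a : W) : W := Nat.iter k nxt a.

Lemma iterK_lt : forall k k' a, k < k' -> lt (iterK k a) (iterK k' a).
Proof.
  intros k k' a H. induction H.
  - apply nxt_spec.
  - eapply lt_trans; [exact IHle| apply nxt_spec].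
Qed.

Lemma iterK_le : forall k a, lt a (iterK k a) \/ a = iterK k a.
Proof.
  intros [|k] a; [right; reflexivity| left]. apply (iterK_lt a (Nat.lt_0_succ k)).
Qed.

Lemma lim_above : forall c, exists d, is_limit lt d /\ lt c d.
Proof.
  intro c.
  set (X := fun x => exists k, x = iterK k c).
  destruct (countable_bounded (X := X)) as [u Hu].
  { exists (fun x => epsilon (inhabits 0) (fun k => x = iterK k c)).
    intros x y Hx Hy E.
    pose proof (epsilon_spec (inhabits 0) _ Hx) as Ex.
    pose proof (epsilon_spec (inhabits 0) _ Hy) as Ey.
    rewrite Ex, Ey, E. reflexivity. }
  destruct (min_exists (fun d => forall x, X x -> lt x d)) as [l [Hl Hmin]].
  { exists u; auto. }
  exists l. assert (Hc : lt c l) by (apply Hl; exists 0; reflexivity).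
  split; auto. split; [exists c; auto|].
  intros b Hb.
  assert (~ forall x, X x -> lt x b) by (intro H; exact (Hmin b H Hb)).
  apply not_all_ex_not in H. destruct H as [x Hx].
  apply imply_to_and in Hx. destruct Hx as [[k Ek] Hx]. subst x.
  exists (iterK (S k) c). split.
  - destruct (lt_tot (iterK k c) b) as [h|[h|h]]; [contradiction| |].
    + rewrite <- h. apply (iterK_lt c (Nat.lt_succ_diag_r k)).
    + eapply lt_trans; [exact h| apply (iterK_lt c (Nat.lt_succ_diag_r k))].
  - apply Hl. exists (S k); reflexivity.
Qed.

Lemma lim_uncountable : ~ countable (is_limit lt).
Proof.
  intro H. destruct (countable_bounded H) as [u Hu].
  destruct (lim_above u) as [d [Hd Hud]].
  apply (@lt_irr u). eapply lt_trans; [exact Hud| apply Hu; auto].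
Qed.

Definition hF (a : W) (rec : forall b, lt b a -> W) : W :=
  epsilon inhW (fun c => forall b (H : lt b a) k, lt (iterK k (rec b H)) c).

Definition hh : W -> W := Fix lt_wf (fun _ => W) hF.

Lemma hh_eq : forall a, hh a = @hF a (fun b _ => hh b).
Proof.
  intro a. unfold hh. rewrite Fix_eq. reflexivity.
  intros x f g Hfg. assert (f = g).
  { apply functional_extensionality_dep; intro b. apply functional_extensionality_dep; intro p. auto. }
  subst; reflexivity.
Qed.

Lemma hh_spec : forall a b k, lt b a -> lt (iterK k (hh b)) (hh a).
Proof.
  intros a. rewrite hh_eq. unfold hF.
  match goal with |- context[epsilon ?i ?P] => assert (HP : P (epsilon i P)) end.
  2:{ intros b k Hb. exact (HP b Hb k). }
  apply epsilon_spec.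
  set (X := fun x => exists b k, lt b a /\ x = iterK k (hh b)).
  destruct (W_seg a) as [fa Hfa].
  destruct (countable_bounded (X := X)) as [c Hc].
  { set (pr := fun x => epsilon (inhabits (a, 0)) (fun pr : W * nat => lt (fst pr) a /\ x = iterK (snd pr) (hh (fst pr)))).
    assert (Hpr : forall x, X x -> lt (fst (pr x)) a /\ x = iterK (snd (pr x)) (hh (fst (pr x)))).
    { intros x Hx. unfold pr. apply epsilon_spec. destruct Hx as [b [k [h1 h2]]]. exists (b, k); auto. }
    exists (fun x => Cantor.to_nat (fa (fst (pr x)), snd (pr x))).
    intros x y Hx Hy E.
    apply (f_equal Cantor.of_nat) in E. rewrite !Cantor.cancel_of_to in E.
    injection E; intros E2 E1.
    destruct (Hpr x Hx) as [P1 P2]. destruct (Hpr y Hy) as [Q1 Q2].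
    rewrite P2, Q2, E2. f_equal. f_equal. apply Hfa; auto. }
  exists c. intros b Hb k. apply Hc. exists b, k; auto.
Qed.

Lemma lt_le_trans : forall a b c, lt a b -> (lt b c \/ b = c) -> lt a c.
Proof. intros a b c H [H'|H']; [eapply lt_trans; eauto| subst; auto]. Qed.

Lemma hh_inj : forall a a' k k', iterK k (hh a) = iterK k' (hh a') -> a = a' /\ k = k'.
Proof.
  intros a a' k k' E.
  destruct (lt_tot a a') as [h|[h|h]].
  - exfalso. pose proof (hh_spec k h). rewrite E in H.
    apply (@lt_irr (iterK k' (hh a'))). eapply lt_le_trans; [exact H| apply iterK_le].
  - subst. split; auto. destruct (Nat.lt_total k k') as [h|[h|h]]; auto; exfalso.
    + pose proof (iterK_lt (hh a') h). rewrite E in H. exact (@lt_irr _ H).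
    + pose proof (iterK_lt (hh a') h). rewrite E in H. exact (@lt_irr _ H).
  - exfalso. pose proof (hh_spec k' h). rewrite <- E in H.
    apply (@lt_irr (iterK k (hh a))). eapply lt_le_trans; [exact H| apply iterK_le].
Qed.

Definition surjW (A : Type) := exists f : W -> A, forall y, exists w, f w = y.

Lemma surj_Wnat : surjW (W * nat).
Proof.
  exists (fun w => epsilon (inhabits (w, 0)) (fun pr : W * nat => w = iterK (snd pr) (hh (fst pr)))).
  intros [a k]. exists (iterK k (hh a)).
  match goal with |- epsilon ?i ?P = _ => assert (HP : P (epsilon i P)) end.
  { apply epsilon_spec. exists (a, k); reflexivity. }
  destruct (epsilon _ _) as [a' k']. simpl in HP. apply hh_inj in HP. destruct HP; subst; auto.
Qed.

Lemma surj_WW : surjW (W * W).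
Proof.
  destruct surj_Wnat as [s Hs].
  assert (HF : forall a, exists f : W -> nat, forall x y, (lt x a \/ x = a) -> (lt y a \/ y = a) -> f x = f y -> x = y).
  { intro a. destruct (count_le a) as [f Hf]. exists f; auto. }
  apply choice in HF. destruct HF as [F HF].
  set (e := fun a n => epsilon inhW (fun b => (lt b a \/ b = a) /\ F a b = n)).
  assert (He : forall a b, (lt b a \/ b = a) -> e a (F a b) = b).
  { intros a b Hb. unfold e.
    match goal with |- epsilon ?i ?P = _ => assert (HP : P (epsilon i P)) end.
    { apply epsilon_spec. exists b; auto. }
    destruct HP as [h1 h2]. apply (HF a); auto. }
  exists (fun w => let (a, m) := s w in (e a (fst (Cantor.of_nat m)), e a (snd (Cantor.of_nat m)))).
  intros [b c].
  assert (Hm : exists a, (lt b a \/ b = a) /\ (lt c a \/ c = a)).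
  { destruct (lt_tot b c) as [h|[h|h]]; [exists c| exists c | exists b]; subst; auto. }
  destruct Hm as [a [Hb Hc]].
  destruct (Hs (a, Cantor.to_nat (F a b, F a c))) as [w Hw'].
  exists w. rewrite Hw'. rewrite Cantor.cancel_of_to. simpl. rewrite !He; auto.
Qed.

Lemma surj_prod : forall A B, surjW A -> surjW B -> surjW (A * B).
Proof.
  intros A B [f Hf] [g Hg]. destruct surj_WW as [s Hs].
  exists (fun w => (f (fst (s w)), g (snd (s w)))).
  intros [a b]. destruct (Hf a) as [x Hx]. destruct (Hg b) as [y Hy].
  destruct (Hs (x, y)) as [w Hw']. exists w. rewrite Hw'. simpl. subst; auto.
Qed.

Lemma surj_option : forall A, surjW A -> surjW (option A).
Proof.
  intros A [f Hf]. destruct surj_Wnat as [s Hs].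
  exists (fun w => match snd (s w) with 0 => None | S _ => Some (f (fst (s w))) end).
  intros [a|].
  - destruct (Hf a) as [x Hx]. destruct (Hs (x, 1)) as [w Hw']. exists w. rewrite Hw'. simpl. subst; auto.
  - destruct (Hs (fst (s (epsilon inhW (fun _ => True))), 0)) as [w Hw']. exists w. rewrite Hw'. reflexivity.
Qed.

Lemma surj_sum : forall A B, surjW A -> surjW B -> surjW (A + B).
Proof.
  intros A B [f Hf] [g Hg]. destruct surj_Wnat as [s Hs].
  exists (fun w => match snd (s w) with 0 => inl (f (fst (s w))) | S _ => inr (g (fst (s w))) end).
  intros [a|b].
  - destruct (Hf a) as [x Hx]. destruct (Hs (x, 0)) as [w Hw']. exists w. rewrite Hw'. simpl. subst; auto.
  - destruct (Hg b) as [x Hx]. destruct (Hs (x, 1)) as [w Hw']. exists w. rewrite Hw'. simpl. subst; auto.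
Qed.

Lemma surj_W : surjW W.
Proof. exists (fun w => w). intro y; exists y; auto. Qed.

Lemma surj_nat : surjW nat.
Proof.
  destruct surj_Wnat as [s Hs]. exists (fun w => snd (s w)).
  intro n. destruct (Hs (epsilon inhW (fun _ => True), n)) as [w Hw']. exists w. rewrite Hw'. auto.
Qed.

Lemma surj_req : surjW ((@Pt W * W) + (@Pt W * @Pt W)).
Proof.
  assert (HP : surjW (@Pt W)) by (apply surj_option, surj_prod; [apply surj_W| apply surj_nat]).
  apply surj_sum; apply surj_prod; auto using surj_W.
Qed.

End Card.
Unset Strict Implicit.
Section CondS.
Context {W : Type} (lt : W -> W -> Prop) (Hw : is_omega1 lt)
  (TS : @Pt W -> Prop) (tlt : @Pt W -> @Pt W -> Prop).

Notation PT := (@Pt W).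
Definition dec (P : Prop) := excluded_middle_informative P.

Lemma hlt_irr : forall a : option W, ~ hlt lt a a.
Proof. intros [a|] H; simpl in H; auto. exact (lt_irr Hw _ H). Qed.

Lemma hlt_trans : forall a b c : option W, hlt lt a b -> hlt lt b c -> hlt lt a c.
Proof.
  intros [a|] [b|] [c|]; simpl; auto; try tauto. apply (lt_trans Hw).
Qed.

Lemma tree_field : forall S R, is_tree_order S R -> forall x y : PT, R x y -> S x /\ S y.
Proof. intros S R H; apply H. Qed.
Lemma tree_irr : forall S R, is_tree_order S R -> forall x : PT, R x x -> False.
Proof. intros S R H; apply H. Qed.
Lemma tree_trans : forall S R, is_tree_order S R -> forall x y z : PT, R x y -> R y z -> R x z.
Proof. intros S R H; apply H. Qed.
Lemma tree_rootS : forall S R, is_tree_order S R -> S (None : PT).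
Proof. intros S R H; apply H. Qed.
Lemma tree_root : forall S R, is_tree_order S R -> forall x : PT, S x -> x <> None -> R None x.
Proof. intros S R H; apply H. Qed.
Lemma tree_lin : forall S R, is_tree_order S R -> forall x y z : PT, R y x -> R z x -> y = z \/ R y z \/ R z y.
Proof. intros S R H; apply H. Qed.
Lemma tree_noroot : forall S R, is_tree_order S R -> forall x : PT, ~ R x None.
Proof.
  intros S R H x Hx. assert (x <> None) by (intro; subst; exact (tree_irr H Hx)).
  apply (@tree_irr _ _ H x). eapply tree_trans; eauto. apply (tree_root H); auto.
  apply (tree_field H Hx).
Qed.

Lemma meet_sym : forall (R : PT -> PT -> Prop) x y m, meet R x y m -> meet R y x m.
Proof. intros R x y m [h1 [h2 h3]]. split; [|split]; auto. Qed.

Section Ext.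
Variable p : @cond W.
Hypothesis Hp : inQ lt TS tlt p.
Variables (z : PT) (Dn Up : PT -> Prop) (N : nat) (g : PT -> nat).

Definition ext : @cond W :=
 Cond (z :: cu p) (cv p)
   (fun s t => clt p s t \/ (t = z /\ Dn s) \/ (s = z /\ Up t))
   (fun s t => if dec (s = z) then
     (if dec (limit_pair lt (fun x => In x (z :: cu p)) (fun x => In x (cv p)) z t) then Some (N + g t) else None)
     else cc p s t).

Hypothesis Hz : ~ In z (cu p).
Hypothesis Hzh : exists bz k, z = Some (bz, k).
Hypothesis HDu : forall s, Dn s -> In s (cu p).
Hypothesis HUu : forall s, Up s -> In s (cu p).
Hypothesis HDnone : Dn None.
Hypothesis HDdown : forall r s, Dn s -> clt p r s -> Dn r.
Hypothesis HUup : forall t r, Up t -> clt p t r -> Up r.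
Hypothesis HDU : forall s t, Dn s -> Up t -> clt p s t.
Hypothesis HDlin : forall s1 s2, Dn s1 -> Dn s2 -> s1 = s2 \/ clt p s1 s2 \/ clt p s2 s1.
Hypothesis HUpred : forall s t, Up t -> clt p s t -> Dn s \/ Up s.
Hypothesis HDht : forall s, Dn s -> hlt lt (ht s) (ht z).
Hypothesis HUht : forall t, Up t -> hlt lt (ht z) (ht t).
Hypothesis HUmeet : forall s t m, Up s -> Up t -> s <> t -> meet (clt p) s t m -> Up m.
Hypothesis HDmeet : forall t, In t (cu p) -> ~ Up t -> exists m, Dn m /\ (m = t \/ clt p m t) /\
   forall r, Dn r -> (r = t \/ clt p r t) -> r = m \/ clt p r m.
Hypothesis HN : forall a b n, cc p a b = Some n -> n < N.
Hypothesis Hg : forall a b, In a (cv p) -> In b (cv p) -> g a = g b -> a = b.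

Lemma ext_ok : inQ lt TS tlt ext /\ Qle p ext.
Proof.
  destruct Hp as [Hu0 [Hv0 [HvT [H2 [Htr [Hht [Hmt [Hdom Hcol]]]]]]]].
  set (R' := clt ext).
  assert (F1 : forall s, In s (cu p) -> s <> z) by (intros s Hs E; subst; auto).
  assert (Fin : forall s t, clt p s t -> In s (cu p) /\ In t (cu p)) by (apply (tree_field Htr)).
  assert (F2 : forall r s, R' r s -> s <> z -> clt p r s \/ (r = z /\ Up s)).
  { intros r s [h|[[h1 h2]|h]] hs; auto; contradiction. }
  assert (F3 : forall r s, R' r s -> r <> z -> s <> z -> clt p r s).
  { intros r s h hr hs. destruct (F2 r s h hs) as [h'|[h1 h2]]; auto; contradiction. }
  assert (Rz : forall r, R' r z -> Dn r).
  { intros r [h|[[h1 h2]|[h1 h2]]]; auto.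
    - exfalso; apply Hz; apply (Fin _ _ h).
    - exfalso; apply Hz; apply HUu; auto. }
  assert (Fmeet : forall x y m, In x (cu p) -> In y (cu p) -> x <> y -> meet (clt p) x y m -> meet R' x y m).
  { intros x y m Hx Hy Hxy [m1 [m2 m3]].
    split; [|split].
    - destruct m1; [left|right; left]; auto.
    - destruct m2; [left|right; left]; auto.
    - intros r Hr1 Hr2.
      destruct (dec (r = z)) as [Er|Nr].
      + subst r. destruct Hr1 as [E|Hr1]; [exfalso; apply (F1 x Hx); auto|].
        destruct Hr2 as [E|Hr2]; [exfalso; apply (F1 y Hy); auto|].
        destruct (F2 _ _ Hr1 (F1 x Hx)) as [h|[_ Ux]]; [exfalso; apply Hz; apply (Fin _ _ h)|].
        destruct (F2 _ _ Hr2 (F1 y Hy)) as [h|[_ Uy]]; [exfalso; apply Hz; apply (Fin _ _ h)|].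
        right. right. right. split; auto. eapply HUmeet; [exact Ux| exact Uy| auto| split; [|split]; auto].
      + assert (A1 : r = x \/ clt p r x) by (destruct Hr1; [left|right; apply F3]; auto using F1).
        assert (A2 : r = y \/ clt p r y) by (destruct Hr2; [left|right; apply F3]; auto using F1).
        destruct (m3 r A1 A2); [left|right; left]; auto. }
  assert (Htr' : is_tree_order (fun x => In x (z :: cu p)) R').
  { split; [|split; [|split; [|split; [|split]]]].
    - intros x y [h|[[h1 h2]|[h1 h2]]]; subst; simpl.
      + destruct (Fin _ _ h); auto.
      + auto.
      + auto.
    - intros x [h|[[h1 h2]|[h1 h2]]].
      + exact (tree_irr Htr h).
      + subst; apply Hz; auto.
      + subst; apply Hz; auto.
    - intros x y w [h|[[h1 h2]|[h1 h2]]] [h'|[[h1' h2']|[h1' h2']]]; subst.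
      + left; eapply tree_trans; eauto.
      + right; left; split; eauto.
      + exfalso; apply Hz; apply (Fin _ _ h).
      + exfalso; apply Hz; apply (Fin _ _ h').
      + exfalso; apply Hz; auto.
      + left; auto.
      + right; right; split; eauto.
      + exfalso; exact (tree_irr Htr (HDU h2' h2)).
      + exfalso; apply Hz; auto.
    - simpl; auto.
    - intros x [E|Hx] Hn.
      + subst. right; left; auto.
      + left. apply (tree_root Htr); auto.
    - intros x y w Hy Hw0.
      destruct (dec (x = z)) as [E|Nx].
      + subst x. apply Rz in Hy. apply Rz in Hw0.
        destruct (HDlin Hy Hw0) as [h|[h|h]]; [left|right; left; left|right; right; left]; auto.
      + destruct (F2 _ _ Hy Nx) as [hy|[Ey Ux]]; [destruct (F2 _ _ Hw0 Nx) as [hw|[Ew Ux]]|destruct (F2 _ _ Hw0 Nx) as [hw|[Ew Ux2]]].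
        * destruct (tree_lin Htr hy hw) as [h|[h|h]]; [left|right; left; left|right; right; left]; auto.
        * subst w. destruct (HUpred Ux hy) as [h|h].
          -- right; left; right; left; auto.
          -- right; right; right; right; auto.
        * subst y. destruct (HUpred Ux hw) as [h|h].
          -- right; right; right; left; auto.
          -- right; left; right; right; auto.
        * subst; auto. }
  assert (Hht' : forall x y, R' x y -> hlt lt (ht x) (ht y)).
  { intros x y [h|[[h1 h2]|[h1 h2]]]; subst; auto. }
  assert (Hv' : forall s t n, cc ext s t = Some n -> s = z -> n = N + g t /\ In t (cv p)).
  { intros s t n E Es. simpl in E. destruct (dec (s = z)); [|contradiction].
    destruct (dec _) as [L|L]; [|discriminate]. injection E; intro; subst; split; auto.
    destruct L as [d [_ [_ [h _]]]]; auto. }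
  assert (Hv2 : forall s t, s <> z -> cc ext s t = cc p s t).
  { intros s t Hs. simpl. destruct (dec (s = z)); [contradiction|auto]. }
  assert (Hlp : forall s t, s <> z -> limit_pair lt (fun x => In x (cu p)) (fun x => In x (cv p)) s t <->
                  limit_pair lt (fun x => In x (z :: cu p)) (fun x => In x (cv p)) s t).
  { intros s t Hs. split; intros [d [h1 [h2 [h3 [h4 h5]]]]]; exists d.
    - split; [auto|]. split; [simpl; auto|]. auto.
    - split; [auto|]. split; [destruct h2; [congruence|auto]|]. auto. }
  assert (Hmain : inQ lt TS tlt ext).
  { split; [simpl; auto|]. split; [simpl; auto|]. split; [simpl; auto|].
    split.
    { intros a Ha. destruct (H2 a Ha) as [b [hb1 hb2]]. exists b; simpl; auto. }
    split; [exact Htr'|]. split; [exact Hht'|]. split.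
    { intros x y [E|Hx] [E'|Hy] Hxy.
      - subst; contradiction.
      - subst x. destruct (classic (Up y)) as [Uy|Uy].
        + exists z. split; [simpl; auto|]. split; [left; auto|]. split; [right; right; right; auto|].
          intros r h _; auto.
        + destruct (HDmeet Hy Uy) as [m [Dm [Hm1 Hm2]]]. exists m. split; [simpl; right; auto|].
          split; [right; right; left; auto|]. split; [destruct Hm1; [left|right; left]; auto|].
          intros r Hr1 Hr2. destruct Hr1 as [Er|Hr1].
          * subst r. exfalso. destruct Hr2 as [E|Hr2]; [apply (F1 y Hy); auto|].
            destruct (F2 _ _ Hr2 (F1 y Hy)) as [h|[_ h]]; [apply Hz; apply (Fin _ _ h)|auto].
          * apply Rz in Hr1. assert (r <> z) by (apply F1; auto).
            assert (r = y \/ clt p r y) by (destruct Hr2; [left|right; apply F3]; auto using F1).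
            destruct (Hm2 r Hr1 H0); [left|right; left]; auto.
      - subst y. destruct (classic (Up x)) as [Ux|Ux].
        + exists z. split; [simpl; auto|]. apply meet_sym. split; [left; auto|]. split; [right; right; right; auto|].
          intros r h _; auto.
        + destruct (HDmeet Hx Ux) as [m [Dm [Hm1 Hm2]]]. exists m. split; [simpl; right; auto|]. apply meet_sym.
          split; [right; right; left; auto|]. split; [destruct Hm1; [left|right; left]; auto|].
          intros r Hr1 Hr2. destruct Hr1 as [Er|Hr1].
          * subst r. exfalso. destruct Hr2 as [E|Hr2]; [apply (F1 x Hx); auto|].
            destruct (F2 _ _ Hr2 (F1 x Hx)) as [h|[_ h]]; [apply Hz; apply (Fin _ _ h)|auto].
          * apply Rz in Hr1. assert (r <> z) by (apply F1; auto).
            assert (r = x \/ clt p r x) by (destruct Hr2; [left|right; apply F3]; auto using F1).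
            destruct (Hm2 r Hr1 H0); [left|right; left]; auto.
      - destruct (Hmt x y Hx Hy Hxy) as [m [Hm Mm]]. exists m; split; [simpl; auto|]. apply Fmeet; auto. }
    split.
    { intros x y. destruct (dec (x = z)) as [E|Nx].
      - subst x. simpl. destruct (dec (z = z)); [|congruence]. destruct (dec _) as [L|L].
        + split; eauto.
        + split; [intros [n h]; discriminate| intro; contradiction].
      - rewrite Hv2; auto. rewrite Hdom. apply Hlp; auto. }
    intros x1 y1 x2 y2 n E1 E2 Hne.
    destruct (dec (x1 = z)) as [X1|X1]; destruct (dec (x2 = z)) as [X2|X2].
    - exfalso. destruct (Hv' _ _ _ E1 X1) as [n1 i1]. destruct (Hv' _ _ _ E2 X2) as [n2 i2].
      subst. apply Hne. f_equal. apply Hg; auto. lia.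
    - exfalso. destruct (Hv' _ _ _ E1 X1) as [n1 i1]. rewrite Hv2 in E2; auto. apply HN in E2. lia.
    - exfalso. destruct (Hv' _ _ _ E2 X2) as [n1 i1]. rewrite Hv2 in E1; auto. apply HN in E1. lia.
    - rewrite Hv2 in E1, E2; auto.
      destruct (Hcol _ _ _ _ _ E1 E2 Hne) as [c1 [[p1 [p2 p3]] [c3 [m1 [m2 [M1 [M2 M3]]]]]]].
      assert (I1 : In x1 (cu p)) by (destruct (proj1 (Hdom x1 y1) (ex_intro _ n E1)) as [d [_ [h _]]]; auto).
      assert (I2 : In x2 (cu p)) by (destruct (proj1 (Hdom x2 y2) (ex_intro _ n E2)) as [d [_ [h _]]]; auto).
      split; auto. split; [split; [|split]|split; auto].
      + auto.
      + intro h; apply p2; apply F3; auto.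
      + intro h; apply p3; apply F3; auto.
      + exists m1, m2. split; auto. }
  split; [exact Hmain|].
  split; [simpl; auto|]. split; [simpl; auto|]. split; [intros x y h; left; auto|]. split.
  - intros x y n E. assert (In x (cu p)) by (destruct (proj1 (Hdom x y) (ex_intro _ n E)) as [d [_ [h _]]]; auto).
    rewrite Hv2; auto.
  - intros x y m Hx Hy Hxy Hm. apply Fmeet; auto.
Qed.
End Ext.

Section AddV.
Variable p : @cond W.
Hypothesis Hp : inQ lt TS tlt p.
Variables (y : PT) (N : nat) (g : PT -> nat).
Definition addv : @cond W := Cond (cu p) (y :: cv p) (clt p)
 (fun s t => if dec (t = y) then
    (if dec (limit_pair lt (fun x => In x (cu p)) (fun x => In x (y :: cv p)) s y) then Some (N + g s) else None)
    else cc p s t).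
Hypothesis Hy : ~ In y (cv p).
Hypothesis HTy : TS y.
Hypothesis Hb : exists b, In b (cu p) /\ ht y = ht b.
Hypothesis HN : forall a b n, cc p a b = Some n -> n < N.
Hypothesis Hg : forall a b, In a (cu p) -> In b (cu p) -> g a = g b -> a = b.

Lemma addv_ok : inQ lt TS tlt addv /\ Qle p addv.
Proof.
  destruct Hp as [Hu0 [Hv0 [HvT [H2 [Htr [Hht [Hmt [Hdom Hcol]]]]]]]].
  assert (F1 : forall s, In s (cv p) -> s <> y) by (intros s Hs E; subst; auto).
  assert (Hv' : forall s t n, cc addv s t = Some n -> t = y -> n = N + g s /\ In s (cu p)).
  { intros s t n E Es. simpl in E. destruct (dec (t = y)); [|contradiction].
    destruct (dec _) as [L|L]; [|discriminate]. injection E; intro; subst; split; auto.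
    destruct L as [d [_ [h _]]]; auto. }
  assert (Hv2 : forall s t, t <> y -> cc addv s t = cc p s t).
  { intros s t Hs. simpl. destruct (dec (t = y)); [contradiction|auto]. }
  assert (Hlp : forall s t, t <> y -> limit_pair lt (fun x => In x (cu p)) (fun x => In x (cv p)) s t <->
                  limit_pair lt (fun x => In x (cu p)) (fun x => In x (y :: cv p)) s t).
  { intros s t Hs. split; intros [d [h1 [h2 [h3 [h4 h5]]]]]; exists d.
    - split; [auto|]. split; [auto|]. split; [simpl; auto|]. auto.
    - split; [auto|]. split; [auto|]. split; [destruct h3; [congruence|auto]|]. auto. }
  assert (Hmain : inQ lt TS tlt addv).
  { split; [simpl; auto|]. split; [simpl; auto|]. split; [simpl; intros a [E|h]; subst; auto|].
    split.
    { simpl. intros a [E|h]; [subst; auto| apply H2; auto]. }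
    split; [exact Htr|]. split; [exact Hht|]. split; [exact Hmt|]. split.
    { intros x t. destruct (dec (t = y)) as [E|Nt].
      - subst t. simpl. destruct (dec (y = y)); [|congruence]. destruct (dec _) as [L|L].
        + split; eauto.
        + split; [intros [n h]; discriminate| intro; contradiction].
      - rewrite Hv2; auto. rewrite Hdom. apply Hlp; auto. }
    intros x1 y1 x2 y2 n E1 E2 Hne.
    destruct (dec (y1 = y)) as [X1|X1]; destruct (dec (y2 = y)) as [X2|X2].
    - exfalso. destruct (Hv' _ _ _ E1 X1) as [n1 i1]. destruct (Hv' _ _ _ E2 X2) as [n2 i2].
      subst. apply Hne. f_equal. apply Hg; auto. lia.
    - exfalso. destruct (Hv' _ _ _ E1 X1) as [n1 i1]. rewrite Hv2 in E2; auto. apply HN in E2. lia.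
    - exfalso. destruct (Hv' _ _ _ E2 X2) as [n1 i1]. rewrite Hv2 in E1; auto. apply HN in E1. lia.
    - rewrite Hv2 in E1, E2; auto. exact (Hcol _ _ _ _ _ E1 E2 Hne). }
  split; [exact Hmain|].
  split; [simpl; auto|]. split; [simpl; auto|]. split; [simpl; auto|]. split.
  - intros x t n E. assert (In t (cv p)) by (destruct (proj1 (Hdom x t) (ex_intro _ n E)) as [d [_ [_ [h _]]]]; auto).
    rewrite Hv2; auto.
  - intros x t m Hx Ht Hxt Hm. exact Hm.
Qed.
End AddV.
End CondS.

Section Ens.
Context {W : Type} (lt : W -> W -> Prop) (Hw : is_omega1 lt)
  (TS : @Pt W -> Prop) (tlt : @Pt W -> @Pt W -> Prop).
Notation PT := (@Pt W).

Lemma Qle_refl : forall p : @cond W, Qle p p.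
Proof. intro p. split; [|split; [|split; [|split]]]; auto. Qed.

Lemma Qle_trans : forall p q r : @cond W, Qle p q -> Qle q r -> Qle p r.
Proof.
  intros p q r [a1 [a2 [a3 [a4 a5]]]] [b1 [b2 [b3 [b4 b5]]]].
  split; [|split; [|split; [|split]]]; auto.
Qed.

Fixpoint sumf (l : list PT) (f : PT -> nat) : nat :=
  match l with [] => 0 | x :: l' => f x + sumf l' f end.

Lemma In_le_sum : forall l f x, In x l -> f x <= sumf l f.
Proof. induction l as [|y l IH]; simpl; intros f x H; [contradiction|]. destruct H; subst; [lia|].
  specialize (IH f x H). lia. Qed.

Lemma fresh_k : forall (l : list PT) (a : W), exists k, ~ In (Some (a, k)) l.
Proof.
  intros l a. set (f := fun x : PT => match x with Some (_, k) => k | None => 0 end).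
  exists (S (sumf l f)). intro H. apply (In_le_sum f) in H. simpl in H. lia.
Qed.

Lemma bound_cc : forall p : @cond W, inQ lt TS tlt p -> exists N, forall a b n, cc p a b = Some n -> n < N.
Proof.
  intros p Hp. destruct Hp as [_ [_ [_ [_ [_ [_ [_ [Hdom _]]]]]]]].
  set (val := fun a b => match cc p a b with Some n => n | None => 0 end).
  exists (S (sumf (cu p) (fun a => sumf (cv p) (fun b => val a b)))).
  intros a b n E. destruct (proj1 (Hdom a b) (ex_intro _ n E)) as [d [_ [ha [hb _]]]].
  pose proof (In_le_sum (fun b => val a b) hb) as h1. simpl in h1.
  pose proof (In_le_sum (fun a => sumf (cv p) (fun b => val a b)) ha) as h2. simpl in h2.
  unfold val in h1 at 1. rewrite E in h1. lia.
Qed.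

Lemma inj_list : forall l : list PT, exists g : PT -> nat, forall a b, In a l -> In b l -> g a = g b -> a = b.
Proof.
  induction l as [|x l IH].
  - exists (fun _ => 0). intros a b [].
  - destruct IH as [g Hg]. exists (fun a => if dec (a = x) then 0 else S (g a)).
    intros a b Ha Hb. destruct (dec (a = x)), (dec (b = x)); subst; auto; try discriminate.
    intro E; injection E; intro E'. destruct Ha; [congruence|]. destruct Hb; [congruence|]. auto.
Qed.

Lemma ensure_u : forall p x, inQ lt TS tlt p -> exists q, inQ lt TS tlt q /\ Qle p q /\ In x (cu q).
Proof.
  intros p x Hp. destruct (classic (In x (cu p))) as [Hx|Hx].
  { exists p; split; auto; split; auto using Qle_refl. }
  destruct (bound_cc Hp) as [N HN]. destruct (inj_list (cv p)) as [g Hg].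
  pose proof Hp as Hp'.
  destruct Hp' as [Hu0 [Hv0 [HvT [H2 [Htr [Hht [Hmt [Hdom Hcol]]]]]]]].
  destruct x as [[a k]|]; [|contradiction].
  destruct (@ext_ok _ lt TS tlt p Hp (Some (a, k)) (fun s => s = None) (fun _ => False) N g)
    as [Q1 Q2].
  - auto.
  - intros s E; subst; auto.
  - intros s [].
  - auto.
  - intros r s E h; subst. exfalso; exact (tree_noroot Htr h).
  - intros t r [].
  - intros s t _ [].
  - intros s1 s2 E1 E2; subst; auto.
  - intros s t [].
  - intros s E; subst; simpl; auto.
  - intros t [].
  - intros s t m [].
  - intros t Ht _. exists None. split; auto. split.
    + destruct (classic (t = None)); [left; auto| right; apply (tree_root Htr); auto].
    + intros r E _; left; auto.
  - auto.
  - auto.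
  - exists (ext lt p (Some (a, k)) (fun s => s = None) (fun _ => False) N g). split; auto. split; auto.
    simpl; auto.
Qed.

Lemma ensure_v : forall p y, inQ lt TS tlt p -> TS y -> exists q, inQ lt TS tlt q /\ Qle p q /\ In y (cv q).
Proof.
  intros p y Hp Hy. destruct (classic (In y (cv p))) as [Hyv|Hyv].
  { exists p; split; auto; split; auto using Qle_refl. }
  destruct (ensure_u y Hp) as [q1 [Q1 [L1 I1]]].
  destruct (classic (In y (cv q1))) as [Hyv1|Hyv1].
  { exists q1; auto. }
  destruct (bound_cc Q1) as [N HN]. destruct (inj_list (cu q1)) as [g Hg].
  destruct (@addv_ok _ lt TS tlt q1 Q1 y N g) as [A1 A2]; auto.
  - exists y; auto.
  - exists (addv lt q1 y N g). split; auto. split; [eapply Qle_trans; eauto|]. simpl; auto.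
Qed.

Lemma flip : forall (R : PT -> PT -> Prop) a b, (a = b \/ R b a) -> (b = a \/ R b a).
Proof. intros R a b [E|h]; [left; auto|right; auto]. Qed.

Lemma flip2 : forall (R : PT -> PT -> Prop) a b, (a = b \/ R a b) -> (b = a \/ R a b).
Proof. intros R a b [E|h]; [left; auto|right; auto]. Qed.

Lemma le_trans_p : forall (R : PT -> PT -> Prop) S, is_tree_order S R ->
  forall a b c, (a = b \/ R a b) -> (b = c \/ R b c) -> (a = c \/ R a c).
Proof.
  intros R S Htr a b c [E|h] [E'|h']; subst; auto. right; eapply tree_trans; eauto.
Qed.

Lemma below_cmp : forall (R : PT -> PT -> Prop) S, is_tree_order S R ->
  forall x e1 e2, (e1 = x \/ R e1 x) -> (e2 = x \/ R e2 x) -> e1 = e2 \/ R e1 e2 \/ R e2 e1.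
Proof.
  intros R S Htr x e1 e2 [E1|h1] [E2|h2]; subst; auto.
  eapply tree_lin; eauto.
Qed.

Lemma ensure_pred : forall p x b, inQ lt TS tlt p -> In x (cu p) -> hlt lt (Some b) (ht x) ->
  exists q, inQ lt TS tlt q /\ Qle p q /\ exists y, clt q y x /\ ht y = Some b.
Proof.
  intros p x b Hp Hx Hb.
  destruct (classic (exists y, clt p y x /\ ht y = Some b)) as [Hy|Nopred].
  { exists p; split; auto; split; auto using Qle_refl. }
  destruct (bound_cc Hp) as [N HN]. destruct (inj_list (cv p)) as [g Hg].
  destruct (fresh_k (cu p) b) as [k Hk].
  pose proof Hp as Hp'.
  destruct Hp' as [Hu0 [Hv0 [HvT [H2 [Htr [Hht [Hmt [Hdom Hcol]]]]]]]].
  assert (Hxn : x <> None) by (intro; subst; simpl in Hb; auto).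
  set (Dn := fun s => clt p s x /\ hlt lt (ht s) (Some b)).
  set (Up := fun t => exists e, (e = x \/ clt p e x) /\ hlt lt (Some b) (ht e) /\ (t = e \/ clt p e t)).
  assert (Hfin : forall s t, clt p s t -> In s (cu p) /\ In t (cu p)) by apply (tree_field Htr).
  assert (Hcmp : forall s, clt p s x -> s = None \/ hlt lt (ht s) (Some b) \/ hlt lt (Some b) (ht s)).
  { intros [[c k']|] Hs; auto. right. simpl.
    destruct (lt_tot Hw c b) as [h|[h|h]]; auto. subst. exfalso; apply Nopred; exists (Some (b, k')); auto. }
  assert (HhtLe : forall s t, (s = t \/ clt p s t) -> hlt lt (Some b) (ht s) -> hlt lt (Some b) (ht t)).
  { intros s t [E|h] H; subst; auto. eapply (hlt_trans Hw); eauto. }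
  assert (Hirr : forall s, hlt lt (ht s) (Some b) -> hlt lt (Some b) (ht s) -> False).
  { intros s h1 h2. apply (@hlt_irr _ lt Hw (Some b)). eapply (hlt_trans Hw); eauto. }
  destruct (@ext_ok _ lt TS tlt p Hp (Some (b, k)) Dn Up N g) as [Q1 Q2].
  - auto.
  - intros s [h _]. apply (Hfin _ _ h).
  - intros t [e [[E|h] [_ [E'|h']]]]; subst; auto; try apply (Hfin _ _ h'); apply (Hfin _ _ h).
  - split; [apply (tree_root Htr); auto| simpl; auto].
  - intros r s [h1 h2] h. split; [eapply tree_trans; eauto|]. eapply (hlt_trans Hw); [apply Hht; exact h| auto].
  - intros t r [e [h1 [h2 h3]]] h. exists e. split; auto. split; auto. right.
    destruct h3; [subst; auto| eapply tree_trans; eauto].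
  - intros s t [h1 h2] [e [e1 [e2 e3]]].
    destruct (below_cmp Htr (or_intror h1) e1) as [E|[h|h]].
    + subst. exfalso; eauto.
    + destruct e3; [subst; auto| eapply tree_trans; eauto].
    + exfalso. apply (Hirr s h2). eapply (hlt_trans Hw); [exact e2| apply Hht; exact h].
  - intros s1 s2 [h1 _] [h2 _]. eapply tree_lin; eauto.
  - intros s t [e [e1 [e2 e3]]] h.
    assert (C : s = e \/ clt p s e \/ clt p e s).
    { destruct e3 as [E|h3]; [subst; auto| eapply tree_lin; eauto]. }
    destruct C as [E|[C|C]].
    + right. exists e; subst; auto.
    + assert (hs : clt p s x) by (destruct e1; [subst; auto| eapply tree_trans; eauto]).
      destruct (Hcmp s hs) as [E|[h'|h']].
      * left. split; auto. subst; simpl; auto.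
      * left; split; auto.
      * right. exists s. auto.
    + right. exists e. auto.
  - intros s [_ h]; simpl; auto.
  - intros t [e [_ [h1 h2]]]. simpl. destruct h2 as [E|h2]; [subst; auto| apply (HhtLe e t); auto].
  - intros s t m [e1 [a1 [a2 a3]]] [e2 [b1 [b2 b3]]] Hst [m1 [m2 m3]].
    destruct (below_cmp Htr a1 b1) as [E|[h|h]].
    + subst. exists e2. split; auto. split; auto.
      destruct (m3 e2 (flip a3) (flip b3)) as [E|E]; [left; symmetry; exact E|right; exact E].
    + exists e1. split; auto. split; auto.
      destruct (m3 e1 (flip a3) (le_trans_p Htr (or_intror h) (flip b3))) as [E|E]; [left; symmetry; exact E|right; exact E].
    + exists e2. split; auto. split; auto.
      destruct (m3 e2 (le_trans_p Htr (or_intror h) (flip a3)) (flip b3)) as [E|E]; [left; symmetry; exact E|right; exact E].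
  - intros t Ht NUp.
    assert (Htx : x <> t) by (intro; subst; apply NUp; exists t; auto).
    destruct (Hmt x t Hx Ht Htx) as [m [Hm [m1 [m2 m3]]]].
    assert (hm : clt p m x).
    { destruct m1 as [E|h]; auto. subst m. exfalso; apply NUp. exists x. split; auto. split; auto. apply flip2; auto. }
    exists m. split; [|split; auto].
    + destruct (Hcmp m hm) as [E|[h|h]].
      * split; auto; subst; simpl; auto.
      * split; auto.
      * exfalso; apply NUp. exists m. split; auto. split; auto. apply flip2; auto.
    + intros r [r1 r2] hr. apply m3; auto.
  - auto.
  - auto.
  - exists (ext lt p (Some (b, k)) Dn Up N g). split; auto. split; auto.
    exists (Some (b, k)). split; auto. simpl. right; right. split; auto. exists x. auto.
Qed.
End Ens.

Section Gen.
Context {W : Type} (lt : W -> W -> Prop) (Hw : is_omega1 lt)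
  (TS : @Pt W -> Prop) (tlt : @Pt W -> @Pt W -> Prop) (HT : inA lt TS tlt).
Notation PT := (@Pt W).

Definition Dreq (rho : (PT * W) + (PT * PT)) : @cond W -> Prop :=
  match rho with
  | inl (x, b) => fun q => inQ lt TS tlt q /\ In x (cu q) /\
       (hlt lt (Some b) (ht x) -> exists y, clt q y x /\ ht y = Some b)
  | inr (x, y) => fun q => inQ lt TS tlt q /\ In x (cu q) /\ (TS y -> In y (cv q))
  end.

Lemma Qle_u : forall (p q : @cond W) x, Qle p q -> In x (cu p) -> In x (cu q).
Proof. intros p q x H; apply H. Qed.
Lemma Qle_clt : forall (p q : @cond W) x y, Qle p q -> clt p x y -> clt q x y.
Proof. intros p q x y H; apply H. Qed.
Lemma Qle_cc : forall (p q : @cond W) x y n, Qle p q -> cc p x y = Some n -> cc q x y = Some n.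
Proof. intros p q x y n H; apply H. Qed.
Lemma Qle_meet : forall (p q : @cond W) x y m, Qle p q -> In x (cu p) -> In y (cu p) -> x <> y ->
  meet (clt p) x y m -> meet (clt q) x y m.
Proof. intros p q x y m H; apply H. Qed.

Lemma Q_tree : forall p, inQ lt TS tlt p -> is_tree_order (fun x => In x (cu p)) (clt p).
Proof. intros p H; apply H. Qed.
Lemma Q_ht : forall p, inQ lt TS tlt p -> forall x y, clt p x y -> hlt lt (ht x) (ht y).
Proof. intros p H; apply H. Qed.
Lemma Q_meet : forall p, inQ lt TS tlt p -> forall x y, In x (cu p) -> In y (cu p) -> x <> y ->
  exists m, In m (cu p) /\ meet (clt p) x y m.
Proof. intros p H; apply H. Qed.
Lemma Q_dom : forall p, inQ lt TS tlt p -> forall x y, (exists n, cc p x y = Some n) <->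
  limit_pair lt (fun x => In x (cu p)) (fun x => In x (cv p)) x y.
Proof. intros p H; apply H. Qed.
Lemma Q_col : forall p, inQ lt TS tlt p -> coloring_ok lt (clt p) tlt (fun x y n => cc p x y = Some n).
Proof. intros p H; apply H. Qed.
Lemma Q_vTS : forall p, inQ lt TS tlt p -> forall y, In y (cv p) -> TS y.
Proof. intros p H; apply H. Qed.

Lemma Dreq_dense : forall rho, Qdense lt TS tlt (Dreq rho).
Proof.
  intros [[x b]|[x y]]; split.
  - intros p [h _]; auto.
  - intros p Hp. destruct (ensure_u x Hp) as [q1 [Q1 [L1 I1]]].
    destruct (classic (hlt lt (Some b) (ht x))) as [Hb|Hb].
    + destruct (ensure_pred Hw Q1 I1 Hb) as [q2 [Q2 [L2 Y2]]].
      exists q2. split; [split; [auto| split; [eapply Qle_u; eauto| auto]]|]. eapply Qle_trans; eauto.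
    + exists q1. split; auto. split; auto. split; auto. intro; contradiction.
  - intros p [h _]; auto.
  - intros p Hp. destruct (ensure_u x Hp) as [q1 [Q1 [L1 I1]]].
    destruct (classic (TS y)) as [Hy|Hy].
    + destruct (ensure_v Q1 Hy) as [q2 [Q2 [L2 Y2]]].
      exists q2. split; [split; [auto| split; [eapply Qle_u; eauto| auto]]|]. eapply Qle_trans; eauto.
    + exists q1. split; auto. split; auto. split; auto. intro; contradiction.
Qed.

Section Filt.
Variable G : @cond W -> Prop.
Hypothesis HG : Qfilter lt TS tlt G.
Hypothesis HD : forall rho, exists p, G p /\ Dreq rho p.

Let S1 := fun x => exists p, G p /\ In x (cu p).
Let R1 := fun x y => exists p, G p /\ clt p x y.
Let c1 := fun x y n => exists p, G p /\ cc p x y = Some n.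

Lemma G_in : forall p, G p -> inQ lt TS tlt p.
Proof. apply HG. Qed.
Lemma G_dir : forall p q, G p -> G q -> exists r, G r /\ Qle p r /\ Qle q r.
Proof. apply HG. Qed.

Lemma S1_all : forall x, S1 x.
Proof. intro x. destruct (HD (inr (x, None))) as [p [Gp [_ [h _]]]]. exists p; auto. Qed.

Lemma R1_ext : forall q x y, G q -> R1 x y -> exists r, G r /\ Qle q r /\ clt r x y.
Proof.
  intros q x y Gq [p [Gp h]]. destruct (G_dir Gq Gp) as [r [Gr [L1 L2]]].
  exists r. split; auto. split; auto. eapply Qle_clt; eauto.
Qed.

Lemma le_ext : forall q z x, G q -> (z = x \/ R1 z x) -> exists r, G r /\ Qle q r /\ (z = x \/ clt r z x).
Proof.
  intros q z x Gq [E|h].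
  - exists q. split; auto. split; auto using Qle_refl.
  - destruct (R1_ext Gq h) as [r [Gr [L h']]]. exists r. auto.
Qed.

Lemma two_in : forall x y, exists r, G r /\ In x (cu r) /\ In y (cu r).
Proof.
  intros x y. destruct (S1_all x) as [p [Gp hp]]. destruct (S1_all y) as [q [Gq hq]].
  destruct (G_dir Gp Gq) as [r [Gr [L1 L2]]]. exists r. split; auto. split; [exact (Qle_u L1 hp)| exact (Qle_u L2 hq)].
Qed.

Lemma meetG : forall r x y m, G r -> In x (cu r) -> In y (cu r) -> x <> y ->
  meet (clt r) x y m -> meet R1 x y m.
Proof.
  intros r x y m Gr Hx Hy Hxy Hm. pose proof Hm as [m1 [m2 m3]].
  split; [|split].
  - destruct m1; [left; auto| right; exists r; auto].
  - destruct m2; [left; auto| right; exists r; auto].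
  - intros z Hz1 Hz2.
    destruct (le_ext Gr Hz1) as [r1 [G1 [L1 h1]]].
    destruct (le_ext G1 Hz2) as [r2 [G2 [L2 h2]]].
    assert (L : Qle r r2) by (eapply Qle_trans; eauto).
    assert (M : meet (clt r2) x y m) by (eapply Qle_meet; eauto).
    destruct M as [_ [_ M3]].
    assert (h1' : z = x \/ clt r2 z x) by (destruct h1 as [E|E]; [left; exact E| right; exact (Qle_clt L2 E)]).
    destruct (M3 z h1' h2); [left; auto| right; exists r2; auto].
Qed.

Lemma notR1 : forall r a b, G r -> In a (cu r) -> In b (cu r) -> perp (clt r) a b -> ~ R1 a b.
Proof.
  intros r a b Gr Ha Hb [P1 [P2 P3]] HR.
  destruct (R1_ext Gr HR) as [r' [Gr' [L h]]].
  destruct (Q_meet (G_in Gr) Ha Hb P1) as [m [Hm Mm]].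
  assert (Mm' : meet (clt r') a b m) by (eapply Qle_meet; eauto).
  destruct Mm as [m1 [m2 _]]. destruct Mm' as [_ [_ m3]].
  pose proof (Q_tree (G_in Gr)) as Tr. pose proof (Q_tree (G_in Gr')) as Tr'.
  destruct m1 as [E|h1].
  - subst m. destruct m2; [contradiction| contradiction].
  - destruct (m3 a (or_introl eq_refl) (or_intror h)) as [E|h2].
    + subst m. exact (tree_irr Tr h1).
    + apply (tree_irr Tr' (x := a)). eapply tree_trans; [exact Tr'| exact h2| eapply Qle_clt; eauto].
Qed.

Lemma perpG : forall r a b, G r -> In a (cu r) -> In b (cu r) -> perp (clt r) a b -> perp R1 a b.
Proof.
  intros r a b Gr Ha Hb Hp. split; [apply Hp|]. split.
  - eapply notR1; eauto.
  - eapply notR1; eauto. destruct Hp as [p1 [p2 p3]]. split; auto.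
Qed.

Lemma col1 : coloring_ok lt R1 tlt c1.
Proof.
  intros x1 y1 x2 y2 n [p1 [G1 E1]] [p2 [G2 E2]] Hne.
  destruct (G_dir G1 G2) as [r [Gr [L1 L2]]].
  apply (Qle_cc L1) in E1. apply (Qle_cc L2) in E2.
  destruct (Q_col (G_in Gr) E1 E2 Hne) as [h1 [h2 [h3 [m1 [m2 [M1 [M2 M3]]]]]]].
  assert (I1 : In x1 (cu r)) by (destruct (proj1 (Q_dom (G_in Gr) x1 y1) (ex_intro _ n E1)) as [d [_ [h _]]]; auto).
  assert (I2 : In x2 (cu r)) by (destruct (proj1 (Q_dom (G_in Gr) x2 y2) (ex_intro _ n E2)) as [d [_ [h _]]]; auto).
  split; auto. split; [eapply perpG; eauto|]. split; auto.
  exists m1, m2. split; auto. eapply meetG; eauto. apply h2.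
Qed.

Lemma tree1 : is_tree_order S1 R1.
Proof.
  split; [|split; [|split; [|split; [|split]]]].
  - intros; split; apply S1_all.
  - intros x [p [Gp h]]. exact (tree_irr (Q_tree (G_in Gp)) h).
  - intros x y z h1 [q [Gq h2]]. destruct (R1_ext Gq h1) as [r [Gr [L h1']]].
    exists r. split; auto. eapply tree_trans; [exact (Q_tree (G_in Gr))| exact h1'| eapply Qle_clt; eauto].
  - apply S1_all.
  - intros x [p [Gp h]] Hn. exists p. split; auto. apply (tree_root (Q_tree (G_in Gp))); auto.
  - intros x y z h1 [q [Gq h2]]. destruct (R1_ext Gq h1) as [r [Gr [L h1']]].
    destruct (tree_lin (Q_tree (G_in Gr)) h1' (Qle_clt L h2)) as [E|[h|h]]; auto.
    + right; left; exists r; auto.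
    + right; right; exists r; auto.
Qed.

Lemma ht1 : forall x y, S1 x -> R1 y x -> hlt lt (ht y) (ht x).
Proof. intros x y _ [p [Gp h]]. exact (Q_ht (G_in Gp) h). Qed.

Lemma lev1 : forall a n b, S1 (Some (a, n)) -> lt b a -> exists y, R1 y (Some (a, n)) /\ ht y = Some b.
Proof.
  intros a n b _ Hb. destruct (HD (inl (Some (a, n), b))) as [p [Gp [_ [_ H]]]].
  destruct (H Hb) as [y [h1 h2]]. exists y. split; auto. exists p; auto.
Qed.

Lemma dom1 : forall x y, (exists n, c1 x y n) <-> limit_pair lt S1 TS x y.
Proof.
  intros x y. split.
  - intros [n [p [Gp E]]]. destruct (proj1 (Q_dom (G_in Gp) x y) (ex_intro _ n E)) as [d [h1 [h2 [h3 [h4 h5]]]]].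
    exists d. split; auto. split; [exists p; auto|]. split; auto. eapply Q_vTS; eauto. apply G_in; auto.
  - intros [d [h1 [h2 [h3 [h4 h5]]]]].
    destruct (HD (inr (x, y))) as [p [Gp [Qp [Hx Hy]]]].
    destruct (proj2 (Q_dom Qp x y)) as [n E].
    + exists d. split; auto.
    + exists n, p; auto.
Qed.

Lemma fun1 : forall x y n m, c1 x y n -> c1 x y m -> n = m.
Proof.
  intros x y n m [p [Gp E1]] [q [Gq E2]]. destruct (G_dir Gp Gq) as [r [Gr [L1 L2]]].
  apply (Qle_cc L1) in E1. apply (Qle_cc L2) in E2. rewrite E1 in E2. injection E2; auto.
Qed.

Lemma normal1 : forall x y d, S1 x -> S1 y -> ht x = Some d -> ht y = Some d -> is_limit lt d ->
       x <> y -> ~ (forall z, R1 z x <-> R1 z y).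
Proof.
  intros x y d _ _ Hx Hy Hd Hxy H.
  destruct (two_in x y) as [r [Gr [Ix Iy]]].
  destruct (Q_meet (G_in Gr) Ix Iy Hxy) as [m [Im Mm]].
  pose proof (meetG Gr Ix Iy Hxy Mm) as M1.
  destruct Mm as [m1 [m2 _]].
  assert (hm : hlt lt (ht m) (Some d)).
  { destruct m1 as [E|h].
    - subst m. exfalso. destruct m2 as [E|h]; [contradiction|].
      pose proof (Q_ht (G_in Gr) h) as hh. rewrite Hx, Hy in hh. exact (hlt_irr Hw hh).
    - rewrite <- Hx. exact (Q_ht (G_in Gr) h). }
  assert (Hb : exists b, hlt lt (ht m) (Some b) /\ lt b d).
  { destruct (ht m) as [c|] eqn:E.
    - simpl in hm. destruct (proj2 Hd c hm) as [c' [h1 h2]]. exists c'; simpl; auto.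
    - destruct (proj1 Hd) as [b hb]. exists b; simpl; auto. }
  destruct Hb as [b [hb1 hb2]].
  destruct x as [[a k]|]; [|discriminate]. simpl in Hx. injection Hx; intro; subst a.
  destruct (lev1 (a := d) (n := k) (S1_all _) hb2) as [z [hz1 hz2]].
  destruct M1 as [_ [_ M3]].
  destruct (M3 z (or_intror hz1) (or_intror (proj1 (H z) hz1))) as [E|h].
  - subst z. rewrite hz2 in hb1. exact (hlt_irr Hw hb1).
  - pose proof (ht1 (S1_all m) h) as hh. rewrite hz2 in hh.
    apply (hlt_irr Hw (a := ht m)). eapply (hlt_trans Hw); eauto.
Qed.

Lemma branch1 : forall B, is_branch S1 R1 B -> countable B.
Proof.
  intros B [[Bs Bc] Bmax].
  assert (Tr := tree1).
  assert (hinj : forall x y, B x -> B y -> ht x = ht y -> x = y).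
  { intros x y Bx By E. destruct (Bc x y Bx By) as [h|[h|h]]; auto; exfalso;
    pose proof (ht1 (S1_all _) h) as hh; rewrite E in hh; exact (hlt_irr Hw hh). }
  assert (down : forall x z, B x -> R1 z x -> B z).
  { intros x z Bx Hz.
    assert (Cc : is_chain S1 R1 (fun w => B w \/ w = z)).
    { split; [intros; apply S1_all|].
      intros u w Hu Hw'. destruct Hu as [Bu|Eu]; destruct Hw' as [Bw|Ew].
      - apply Bc; auto.
      - subst w. destruct (Bc u x Bu Bx) as [E|[h|h]].
        + subst u; right; right; auto.
        + exact (tree_lin Tr h Hz).
        + right; right. eapply tree_trans; eauto.
      - subst u. destruct (Bc w x Bw Bx) as [E|[h|h]].
        + subst w; right; left; auto.
        + exact (tree_lin Tr Hz h).
        + right; left. eapply tree_trans; eauto.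
      - subst; left; auto. }
    apply (Bmax _ Cc); auto. }
  apply NNPP; intro NC.
  assert (unb : forall a, exists x c k, B x /\ x = Some (c, k) /\ lt a c).
  { intro a. apply NNPP; intro Hn. apply NC.
    destruct (count_le Hw a) as [ga Hga].
    exists (fun x : PT => match x with None => 0 | Some (c, _) => S (ga c) end).
    assert (Hle : forall c k, B (Some (c, k)) -> lt c a \/ c = a).
    { intros c k Bx. destruct (lt_tot Hw a c) as [h|[h|h]]; auto.
      exfalso; apply Hn; exists (Some (c, k)), c, k; auto. }
    intros [[c k]|] [[c' k']|] Bx By E; try discriminate; auto.
    injection E; intro E'. apply Hga in E'; eauto. subst c'. apply hinj; auto. }
  set (F := fun d => epsilon (inhabits 0) (fun n => exists z y, B z /\ ht z = Some d /\ ht y = Some d /\ c1 z y n)).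
  assert (HF : forall d, is_limit lt d -> exists z y, B z /\ ht z = Some d /\ ht y = Some d /\ c1 z y (F d)).
  { intros d Hd. unfold F. apply epsilon_spec.
    destruct (unb d) as [x [c [k [Bx [Ex Hdc]]]]]. subst x.
    destruct (lev1 (a := c) (n := k) (S1_all _) Hdc) as [z [hz1 hz2]].
    destruct HT as [_ [_ [_ [Hh _]]]]. destruct (Hh d) as [n Hn].
    destruct (proj2 (dom1 z (Some (d, n)))) as [col Hcol].
    - exists d. split; auto. split; [apply S1_all|]. split; auto.
    - exists col, z, (Some (d, n)). split; [eapply down; eauto|]. auto. }
  apply (lim_uncountable Hw). exists F. intros d1 d2 L1 L2 E.
  destruct (HF d1 L1) as [z1 [y1 [B1 [hz1 [hy1 c1']]]]].
  destruct (HF d2 L2) as [z2 [y2 [B2 [hz2 [hy2 c2']]]]].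
  apply NNPP; intro Nd.
  rewrite E in c1'.
  assert (Hne : (z1, y1) <> (z2, y2)).
  { intro Ep. injection Ep; intros; subst. rewrite hz1 in hz2. injection hz2; auto. }
  destruct (col1 c1' c2' Hne) as [_ [[P1 [P2 P3]] _]].
  destruct (Bc z1 z2 B1 B2) as [h|[h|h]]; contradiction.
Qed.

Lemma gen_ok : inA2sp lt S1 R1 TS tlt c1.
Proof.
  split; [|split; [exact HT|split; [exact dom1|split; [exact fun1|exact col1]]]].
  split; [exact tree1|]. split; [exact ht1|]. split; [exact lev1|]. split.
  - intro a. exists 0. apply S1_all.
  - split; [exact branch1| exact normal1].
Qed.
End Filt.
End Gen.

Theorem lemma4p3 (W : Type) (lt : W -> W -> Prop) (Hw : is_omega1 lt)
  (TS : @Pt W -> Prop) (tlt : @Pt W -> @Pt W -> Prop) (HT : inA lt TS tlt) :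
  exists F : W -> @cond W -> Prop,
    (forall i, Qdense lt TS tlt (F i)) /\
    forall G : @cond W -> Prop,
      Qfilter lt TS tlt G ->
      (forall i, exists p, G p /\ F i p) ->
      inA2sp lt
        (fun x => exists p, G p /\ In x (cu p))
        (fun x y => exists p, G p /\ clt p x y)
        TS tlt
        (fun x y n => exists p, G p /\ cc p x y = Some n).
Proof.
  destruct (surj_req Hw) as [r Hr].
  exists (fun i => Dreq lt TS tlt (r i)). split.
  - intro i. apply (Dreq_dense Hw).
  - intros G HG HGm. apply (gen_ok Hw HT HG).
    intro rho. destruct (Hr rho) as [w Hw']. subst rho. apply HGm.
Qed.
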